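(* Consider a single-stage screening process with two groups $A,B$ and a test satisfying $\tau_{X1}>\tau_{X0}\ge0$ for $X\in\{A,B\}$. The interview efficiency of any policy satisfying Equalized Odds (with positive true positive rate) is at most $$\frac{1}{1+\frac{u_A+u_B}{q_A+q_B}\cdot\max\left(\frac{\tau_{A0}}{\tau_{A1}},\frac{\tau_{B0}}{\tau_{B1}}\right)}.$$
   Context: Group $X$ has base rate $q_X$ and $u_X=1-q_X$; $\tau_{X1}$ (resp. $\tau_{X0}$) is the probability a qualified (resp. unqualified) member of $X$ passes the test. A policy specifies $\pi_{X1},\pi_{X0}\in[0,1]$, the promotion probabilities after passing (resp. failing). Let $M_X=\tau_{X1}\pi_{X1}+(1-\tau_{X1})\pi_{X0}$ and $N_X=\tau_{X0}\pi_{X1}+(1-\tau_{X0})\pi_{X0}$. The policy satisfies Equalized Odds if $M_A=M_B=:M$ and $N_A=N_B=:N$; its interview efficiency is then $\frac{(q_A+q_B)M}{(q_A+q_B)M+(u_A+u_B)N}$. *)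

(* Defs.v *)
From mathcomp Require Import all_boot all_order all_algebra.
Set Implicit Arguments. Unset Strict Implicit. Unset Printing Implicit Defensive.
Import Order.TTheory GRing.Theory Num.Theory.
Local Open Scope ring_scope.

(* Probability a qualified member (test pass prob tau1) is promoted:
   M_X = tau1 * pi1 + (1 - tau1) * pi0 *)
Definition promoM {R : numFieldType} (tau1 pi1 pi0 : R) : R :=
  tau1 * pi1 + (1 - tau1) * pi0.
(* Probability an unqualified member (test pass prob tau0) is promoted:
   N_X = tau0 * pi1 + (1 - tau0) * pi0 *)
Definition promoN {R : numFieldType} (tau0 pi1 pi0 : R) : R :=
  tau0 * pi1 + (1 - tau0) * pi0.

Definition efficiency {R : numFieldType} (qA qB M N : R) : R :=
  (qA + qB) * M / ((qA + qB) * M + ((1 - qA) + (1 - qB)) * N).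

Definition in01 {R : numFieldType} (x : R) : bool := (0 <= x) && (x <= 1).

(* Main.v *)
Require Import Defs.
From mathcomp Require Import all_boot all_order all_algebra.
From mathcomp Require Import ring lra.
Import Order.TTheory GRing.Theory Num.Theory.
Local Open Scope ring_scope.

Lemma ratio_le {R : realFieldType} {t1 t0 : R} (p1 : R) {p0 : R} :
  0 <= t0 -> t0 < t1 -> 0 <= p0 ->
  t0 / t1 * promoM t1 p1 p0 <= promoN t0 p1 p0.
Proof.
move=> h0 h01 hp.
have t1p : 0 < t1 by apply: le_lt_trans h01.
rewrite mulrAC ler_pdivrMr //.
rewrite /promoM /promoN.
have e : (t0 * p1 + (1 - t0) * p0) * t1 - t0 * (t1 * p1 + (1 - t1) * p0)
   = p0 * (t1 - t0) by ring.
rewrite -subr_ge0 e; apply: mulr_ge0 => //; lra.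
Qed.

Theorem mainTheorem17 (R : realFieldType)
  (qA qB tauA1 tauA0 tauB1 tauB0 piA1 piA0 piB1 piB0 : R) :
  in01 qA -> in01 qB -> 0 < qA + qB ->
  in01 tauA1 -> in01 tauA0 -> in01 tauB1 -> in01 tauB0 ->
  0 <= tauA0 -> tauA0 < tauA1 -> 0 <= tauB0 -> tauB0 < tauB1 ->
  in01 piA1 -> in01 piA0 -> in01 piB1 -> in01 piB0 ->
  (* Equalized Odds *)
  promoM tauA1 piA1 piA0 = promoM tauB1 piB1 piB0 ->
  promoN tauA0 piA1 piA0 = promoN tauB0 piB1 piB0 ->
  (* positive true positive rate *)
  0 < promoM tauA1 piA1 piA0 ->
  efficiency qA qB (promoM tauA1 piA1 piA0) (promoN tauA0 piA1 piA0)
  <= 1 / (1 + ((1 - qA) + (1 - qB)) / (qA + qB)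
                * Num.max (tauA0 / tauA1) (tauB0 / tauB1)).
Proof.
move=> /andP[qA0 qA1] /andP[qB0 qB1] hS _ _ _ _ hA0 hA hB0 hB _
  /andP[pA0 _] _ /andP[pB0 _] eM eN hM.
have rA := ratio_le piA1 hA0 hA pA0.
have rB := ratio_le piB1 hB0 hB pB0.
rewrite -eM -eN in rB.
move: rA rB hM.
set M := promoM _ _ _; set N := promoN _ _ _.
have rA0 : 0 <= tauA0 / tauA1 by apply: divr_ge0 => //; lra.
have rB0 : 0 <= tauB0 / tauB1 by apply: divr_ge0 => //; lra.
move: rA0 rB0.
set a := tauA0 / tauA1; set b := tauB0 / tauB1.
move=> a0 b0 rA rB hM.
have [m [m0 hm ->]] : exists m, [/\ 0 <= m, m * M <= N & Num.max a b = m].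
  case: (leP a b) => _; [exists b | exists a]; by split.
rewrite /efficiency.
set S := qA + qB. set U := (1 - qA) + (1 - qB).
have U0 : 0 <= U by rewrite /U; lra.
have S0 : 0 < S by [].
clearbody S U M N.
have N0 : 0 <= N by apply: le_trans hm; apply: mulr_ge0 => //; lra.
have SM : 0 < S * M by apply: mulr_gt0.
have UN : 0 <= U * N by apply: mulr_ge0.
have Um : 0 <= U * m by apply: mulr_ge0.
have D1 : 0 < S * M + U * N by lra.
have D2 : 0 < S + U * m by lra.
have -> : 1 + U / S * m = (S + U * m) / S.
  by field; apply/lt0r_neq0.
rewrite invf_div mul1r ler_pdivrMr // mulrAC ler_pdivlMr //.
have: 0 <= S * (U * (N - m * M)) by apply: mulr_ge0; [lra|apply: mulr_ge0 => //; lra].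
lra.
Qed.
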